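(* Let $\tau_{U,Q}:U\to Q$ be a fibre bundle with local coordinates $(q^i,u^a)$, let $\Gamma:U\to TQ$ be smooth with $\tau_{TQ}\circ\Gamma=\tau_{U,Q}$, locally $\Gamma(q,u)=(q^i,\Gamma^i(q,u))$, and let $L:U\to\mathbb R$ be smooth. Let $\Sigma=\{\mu\in T^*_{\Gamma(u)}TQ:\ u\in U,\ (T_u\Gamma)^*\mu=dL(u)\}$ and define $H(q,p,u)=p_i\Gamma^i(q,u)-L(q,u)$. A curve $\sigma:[t_0,t_1]\to Q$ (in a chart) is a solution of the generalized variational problem determined by $\Sigma$ if and only if there exist curves $u(t)$ and $\tilde\mu(t)=(\tilde\mu_i(t))$ such that $$\frac{d\tilde\mu_i}{dt}=-\frac{\partial H}{\partial q^i}(q,\tilde\mu,u),\qquad \frac{\partial H}{\partial u^a}(q,\tilde\mu,u)=0,\qquad \frac{dq^i}{dt}=\frac{\partial H}{\partial p_i}(q,\tilde\mu,u)=\Gamma^i(q,u).$$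
   Context: A solution of the generalized variational problem determined by $\Sigma\subset T^*TQ$ is a curve $\sigma$ for which there exists a curve $\mu:[t_0,t_1]\to\Sigma$ with $\pi_{TTQ}(\mu(t))=\dot\sigma(t)$ and $\int_{t_0}^{t_1}\langle\mu(t),X^T(t,\dot\sigma(t))\rangle dt=0$ for all time-dependent vector fields $X=X^i(t,q)\partial_{q^i}$ vanishing at $(t_0,\sigma(t_0))$ and $(t_1,\sigma(t_1))$, where $X^T=X^i\partial_{q^i}+(\partial_tX^i+\dot q^j\partial_{q^j}X^i)\partial_{\dot q^i}$. Coordinates on $T^*TQ$: $\mu=\mu_idq^i+\tilde\mu_id\dot q^i$. *)

(* Defs.v *)
From Stdlib Require Import Reals ClassicalEpsilon.
From mathcomp Require Import ssreflect ssrfun ssrbool eqtype ssrnat seq fintype bigop.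
Set Implicit Arguments. Unset Strict Implicit.
Open Scope R_scope.

Definition vec (n : nat) := 'I_n -> R.

Definition rsum (n : nat) (F : 'I_n -> R) : R := \big[Rplus/0]_(i < n) F i.

Definition upd (n : nat) (x : vec n) (i : 'I_n) (s : R) : vec n :=
  fun j => if j == i then x j + s else x j.

(* i-th partial derivative of f at x (meaningful when it exists) *)
Definition pd (n : nat) (f : vec n -> R) (x : vec n) (i : 'I_n) : R :=
  epsilon (inhabits 0) (fun l => derivable_pt_lim (fun s => f (upd x i s)) 0 l).

Definition contn (n : nat) (f : vec n -> R) : Prop :=
  forall x eps, 0 < eps -> exists delta, 0 < delta /\
    forall y, (forall j, Rabs (y j - x j) < delta) -> Rabs (f y - f x) < eps.

Fixpoint Ck (n k : nat) (f : vec n -> R) {struct k} : Prop :=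
  match k with
  | O => contn f
  | S k' => contn f /\ forall i : 'I_n,
       (forall x, derivable_pt_lim (fun s => f (upd x i s)) 0 (pd f x i))
       /\ Ck k' (fun x => pd f x i)
  end.

Definition smooth (n : nat) (f : vec n -> R) : Prop := forall k, Ck k f.

Definition smooth2 (n m : nat) (F : vec n -> vec m -> R) : Prop :=
  smooth (fun z : vec (n + m) =>
            F (fun i => z (lshift m i)) (fun a => z (rshift n a))).

Definition smoothTD (n : nat) (X : R -> vec n -> vec n) : Prop :=
  forall i : 'I_n, smooth (fun z : vec (1 + n) =>
            X (z (lshift n ord0)) (fun j => z (rshift 1 j)) i).

(* derivative of a real curve (meaningful when it exists) *)
Definition dt (c : R -> R) (t : R) : R :=
  epsilon (inhabits 0) (fun l => derivable_pt_lim c t l).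

Fixpoint Ckc (k : nat) (c : R -> R) : Prop :=
  match k with
  | O => continuity c
  | S k' => (forall t, derivable_pt_lim c t (dt c t)) /\ Ckc k' (dt c)
  end.

Definition smooth_curve (c : R -> R) : Prop := forall k, Ckc k c.
Definition smooth_vcurve (n : nat) (c : R -> vec n) : Prop :=
  forall i, smooth_curve (fun t => c t i).

(* Coordinates: Gam(q,u) = (q, Gam^i(q,u)).  A covector mu at the point (q,v) of TQ
   has components mu = mq_i dq^i + mv_i dqdot^i. *)
Definition in_Sigma (n m : nat) (Gam : vec n -> vec m -> vec n)
    (L : vec n -> vec m -> R) (q v mq mv : vec n) : Prop :=
  exists u : vec m,
    (forall i, Gam q u i = v i) /\
    (forall j, mq j + rsum (fun i => mv i * pd (fun q' => Gam q' u i) q j)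
               = pd (fun q' => L q' u) q j) /\
    (forall a, rsum (fun i => mv i * pd (fun u' => Gam q u' i) u a)
               = pd (fun u' => L q u') u a).

(* <mu(t), X^T(t, sigma'(t))> *)
Definition pairing (n : nat) (X : R -> vec n -> vec n) (sigma : R -> vec n)
    (mq mv : R -> vec n) (t : R) : R :=
  rsum (fun i =>
    mq t i * X t (sigma t) i
    + mv t i * (dt (fun s => X s (sigma t) i) t
                + rsum (fun j => dt (fun s => sigma s j) t
                                 * pd (fun q => X t q i) (sigma t) j))).

Definition is_solution (n m : nat) (Gam : vec n -> vec m -> vec n)
    (L : vec n -> vec m -> R) (t0 t1 : R) (sigma : R -> vec n) : Prop :=
  exists mq mv : R -> vec n,
    smooth_vcurve mq /\ smooth_vcurve mv /\
    (forall t, t0 <= t <= t1 ->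
       in_Sigma Gam L (sigma t) (fun i => dt (fun s => sigma s i) t) (mq t) (mv t)) /\
    (forall X : R -> vec n -> vec n, smoothTD X ->
       (forall i, X t0 (sigma t0) i = 0) -> (forall i, X t1 (sigma t1) i = 0) ->
       exists pr : Riemann_integrable (pairing X sigma mq mv) t0 t1,
         RiemannInt pr = 0).

Definition Hfun (n m : nat) (Gam : vec n -> vec m -> vec n)
    (L : vec n -> vec m -> R) (q p : vec n) (u : vec m) : R :=
  rsum (fun i => p i * Gam q u i) - L q u.

(* Main.v *)
Require Import Defs.
From Stdlib Require Import Reals ClassicalEpsilon FunctionalExtensionality Lra.
From mathcomp Require Import ssreflect ssrfun ssrbool eqtype ssrnat seq fintype bigop.
From Coquelicot Require Import Coquelicot.
From HB Require Import structures.
Open Scope R_scope.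
Set Implicit Arguments. Unset Strict Implicit.

Lemma Rplus_assoc' : associative Rplus. Proof. move=> x y z; ring. Qed.
HB.instance Definition _ := Monoid.isComLaw.Build R 0 Rplus Rplus_assoc' Rplus_comm Rplus_0_l.

Lemma pd_spec n (f : vec n -> R) x i l :
  derivable_pt_lim (fun s => f (upd x i s)) 0 l ->
  derivable_pt_lim (fun s => f (upd x i s)) 0 (pd f x i).
Proof. move=> H; rewrite /pd; apply: epsilon_spec; exists l; exact: H. Qed.

Lemma pd_eq n (f : vec n -> R) x i l :
  derivable_pt_lim (fun s => f (upd x i s)) 0 l -> pd f x i = l.
Proof. move=> H; exact: (uniqueness_limite _ _ _ _ (pd_spec H) H). Qed.

Lemma dt_spec c t l : derivable_pt_lim c t l -> derivable_pt_lim c t (dt c t).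
Proof. move=> H; rewrite /dt; apply: epsilon_spec; exists l; exact: H. Qed.

Lemma dt_eq c t l : derivable_pt_lim c t l -> dt c t = l.
Proof. move=> H; exact: (uniqueness_limite _ _ _ _ (dt_spec H) H). Qed.

Lemma deriv_bigseq I (r : seq I) (f : I -> R -> R) (l : I -> R) x :
 (forall i, derivable_pt_lim (f i) x (l i)) ->
 derivable_pt_lim (fun s => \big[Rplus/0]_(i <- r) f i s) x (\big[Rplus/0]_(i <- r) l i).
Proof.
move=> H; elim: r => [|a r IH].
  rewrite big_nil.
  have ->: (fun s => \big[Rplus/0]_(i <- [::]) f i s) = fun _ => 0.
    by apply: functional_extensionality => s; rewrite big_nil.
  exact: derivable_pt_lim_const.
rewrite big_cons.
have ->: (fun s => \big[Rplus/0]_(i <- a :: r) f i s) = (f a + (fun s => \big[Rplus/0]_(i <- r) f i s))%F.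
  by apply: functional_extensionality => s; rewrite big_cons.
exact: derivable_pt_lim_plus.
Qed.

Lemma deriv_rsum n (f : 'I_n -> R -> R) (l : 'I_n -> R) x :
 (forall i, derivable_pt_lim (f i) x (l i)) ->
 derivable_pt_lim (fun s => rsum (fun i => f i s)) x (rsum l).
Proof. move=> H; exact: (deriv_bigseq (index_enum 'I_n) H). Qed.

Lemma rsum_pred1 n (F : 'I_n -> R) i :
  rsum (fun j => if j == i then F j else 0) = F i.
Proof.
rewrite /rsum (bigD1 i) //= eqxx big1 ?Rplus_0_r // => j /negbTE -> //.
Qed.

Lemma rsum_ext n (F G : 'I_n -> R) : (forall i, F i = G i) -> rsum F = rsum G.
Proof. by move=> H; apply: eq_bigr. Qed.

Lemma rsum_plus n (F G : 'I_n -> R) : rsum (fun i => F i + G i) = rsum F + rsum G.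
Proof. by rewrite /rsum big_split. Qed.

Lemma rsum0 n : rsum (fun _ : 'I_n => 0) = 0.
Proof. by rewrite /rsum big1. Qed.

Lemma dpl_ext f g x l : (forall s, f s = g s) -> derivable_pt_lim f x l -> derivable_pt_lim g x l.
Proof. by move=> H; rewrite (functional_extensionality _ _ H). Qed.

Lemma Ckc_ext k f g : (forall t, f t = g t) -> Ckc k f -> Ckc k g.
Proof. by move=> H; rewrite (functional_extensionality _ _ H). Qed.

Lemma smooth_dt c : smooth_curve c -> smooth_curve (dt c).
Proof. move=> H k; exact: (H k.+1).2. Qed.
Lemma smooth_cont c : smooth_curve c -> continuity c.
Proof. move=> H; exact: (H 0%nat). Qed.
Lemma smooth_der c t : smooth_curve c -> derivable_pt_lim c t (dt c t).
Proof. move=> H; exact: (H 1%nat).1. Qed.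

Lemma Ckc_plus k : forall f g, Ckc k f -> Ckc k g -> Ckc k (fun t => f t + g t).
Proof.
elim: k => [|k IH] f g /=.
  move=> Hf Hg; exact: (continuity_plus f g).
move=> [Df Cf] [Dg Cg].
have D : forall t, derivable_pt_lim (fun t => f t + g t) t (dt f t + dt g t).
  move=> t; exact: (derivable_pt_lim_plus f g).
split; first by move=> t; rewrite (dt_eq (D t)).
apply: (Ckc_ext (f := fun t => dt f t + dt g t)); first by move=> t; rewrite (dt_eq (D t)).
exact: IH.
Qed.

Lemma smooth_plus f g : smooth_curve f -> smooth_curve g -> smooth_curve (fun t => f t + g t).
Proof. move=> Hf Hg k; exact: Ckc_plus. Qed.

Lemma smooth_mult_k k : forall f g, smooth_curve f -> smooth_curve g -> Ckc k (fun t => f t * g t).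
Proof.
elim: k => [|k IH] f g Hf Hg /=.
  exact: (continuity_mult f g (smooth_cont Hf) (smooth_cont Hg)).
have D : forall t, derivable_pt_lim (fun t => f t * g t) t (dt f t * g t + f t * dt g t).
  move=> t; exact: (derivable_pt_lim_mult f g _ _ _ (smooth_der t Hf) (smooth_der t Hg)).
split; first by move=> t; rewrite (dt_eq (D t)).
apply: (Ckc_ext (f := fun t => dt f t * g t + f t * dt g t)); first by move=> t; rewrite (dt_eq (D t)).
apply: Ckc_plus; apply: IH => //; exact: smooth_dt.
Qed.

Lemma smooth_mult f g : smooth_curve f -> smooth_curve g -> smooth_curve (fun t => f t * g t).
Proof. move=> Hf Hg k; exact: smooth_mult_k. Qed.

Lemma smooth_const c : smooth_curve (fun _ => c).
Proof.
move=> k; elim: k c => [|k IH] c /=; first exact: continuity_const.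
have D : forall t, derivable_pt_lim (fun _ => c) t 0 by move=> t; exact: derivable_pt_lim_const.
split; first by move=> t; rewrite (dt_eq (D t)).
apply: (Ckc_ext (f := fun _ => 0)); first by move=> t; rewrite (dt_eq (D t)).
exact: IH.
Qed.

Lemma smooth_id : smooth_curve (fun t => t).
Proof.
move=> [|k] /=; first exact: derivable_continuous derivable_id.
have D : forall t, derivable_pt_lim (fun t => t) t 1 by move=> t; exact: derivable_pt_lim_id.
split; first by move=> t; rewrite (dt_eq (D t)).
apply: (Ckc_ext (f := fun _ => 1)); first by move=> t; rewrite (dt_eq (D t)).
exact: smooth_const.
Qed.

Definition cat2 n m (q : vec n) (u : vec m) : vec (n + m) :=
  fun k => match split k with inl i => q i | inr a => u a end.

Lemma cat2_l n m (q : vec n) (u : vec m) i : cat2 q u (lshift m i) = q i.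
Proof. by rewrite /cat2; have := @unsplitK n m (inl i); rewrite /= => ->. Qed.
Lemma cat2_r n m (q : vec n) (u : vec m) a : cat2 q u (rshift n a) = u a.
Proof. by rewrite /cat2; have := @unsplitK n m (inr a); rewrite /= => ->. Qed.

Lemma smooth2_q n m (F : vec n -> vec m -> R) q u j : smooth2 F ->
  derivable_pt_lim (fun s => F (upd q j s) u) 0 (pd (fun q' => F q' u) q j).
Proof.
move=> H; have [_ H1] := H 1%nat; have [D _] := H1 (lshift m j).
apply: (@pd_spec _ (fun q' => F q' u)).
apply: (dpl_ext _ (D (cat2 q u))) => s /=.
congr F; apply: functional_extensionality => i; rewrite /upd.
  by rewrite eq_lshift !cat2_l.
by rewrite eq_rlshift !cat2_r.
Qed.

Lemma smooth2_u n m (F : vec n -> vec m -> R) q u a : smooth2 F ->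
  derivable_pt_lim (fun s => F q (upd u a s)) 0 (pd (fun u' => F q u') u a).
Proof.
move=> H; have [_ H1] := H 1%nat; have [D _] := H1 (rshift n a).
apply: (@pd_spec _ (fun u' => F q u')).
apply: (dpl_ext _ (D (cat2 q u))) => s /=.
congr F; apply: functional_extensionality => i; rewrite /upd.
  by rewrite eq_lrshift !cat2_l.
by rewrite eq_rshift !cat2_r.
Qed.

Section H.
Variables (n m : nat) (Gam : vec n -> vec m -> vec n) (L : vec n -> vec m -> R).
Hypothesis HGam : forall i : 'I_n, smooth2 (fun q u => Gam q u i).
Hypothesis HL : smooth2 L.

Lemma Hq q p u j : pd (fun q' => Hfun Gam L q' p u) q j =
  rsum (fun i => p i * pd (fun q' => Gam q' u i) q j) - pd (fun q' => L q' u) q j.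
Proof.
apply: pd_eq; rewrite /Hfun.
apply: (derivable_pt_lim_minus (fun s => rsum (fun i => p i * Gam (upd q j s) u i))
            (fun s => L (upd q j s) u)); last exact: smooth2_q.
apply: (deriv_rsum (f := fun i s => p i * Gam (upd q j s) u i)) => i.
apply: (derivable_pt_lim_scal (fun s => Gam (upd q j s) u i)).
exact: (smooth2_q (F := fun q u => Gam q u i)).
Qed.

Lemma Hu q p u a : pd (fun u' => Hfun Gam L q p u') u a =
  rsum (fun i => p i * pd (fun u' => Gam q u' i) u a) - pd (fun u' => L q u') u a.
Proof.
apply: pd_eq; rewrite /Hfun.
apply: (derivable_pt_lim_minus (fun s => rsum (fun i => p i * Gam q (upd u a s) i))
            (fun s => L q (upd u a s))); last exact: smooth2_u.
apply: (deriv_rsum (f := fun i s => p i * Gam q (upd u a s) i)) => i.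
apply: (derivable_pt_lim_scal (fun s => Gam q (upd u a s) i)).
exact: (smooth2_u (F := fun q u => Gam q u i)).
Qed.

Lemma Hp q p u j : pd (fun p' => Hfun Gam L q p' u) p j = Gam q u j.
Proof.
apply: pd_eq; rewrite /Hfun.
have ->: Gam q u j = rsum (fun i => if i == j then Gam q u i else 0) - 0.
  by rewrite rsum_pred1 Rminus_0_r.
apply: (derivable_pt_lim_minus (fun s => rsum (fun i => upd p j s i * Gam q u i))
            (fun s => L q u)); last exact: derivable_pt_lim_const.
apply: (deriv_rsum (f := fun i s => upd p j s i * Gam q u i)) => i.
rewrite /upd; case: (i == j).
  apply/is_derive_Reals; auto_derive => //; ring.
apply/is_derive_Reals; auto_derive => //; ring.
Qed.
End H.

Lemma cont_eps f x eps : continuity_pt f x -> 0 < eps ->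
  exists d, 0 < d /\ forall y, Rabs (y - x) < d -> Rabs (f y - f x) < eps.
Proof.
move=> H He; have [alp [Ha Hy]] := H eps He.
exists alp; split => // y Hyx.
case: (Req_dec y x) => [->|Hne]; first by rewrite Rminus_eq_0 Rabs_R0.
apply: (Hy y); split => //; split => //; by apply: not_eq_sym.
Qed.

Lemma cont_co f x : continuity_pt f x -> continuous f x.
Proof. by move=> H; apply/continuity_pt_filterlim. Qed.

Lemma shift0 g t l : derivable_pt_lim g t l -> derivable_pt_lim (fun s => g (t + s)) 0 l.
Proof.
move=> H eps He; have [d Hd] := H eps He; exists d => h Hh Hhd.
by rewrite Rplus_0_l Rplus_0_r; apply: Hd.
Qed.

Lemma unshift0 g t l : derivable_pt_lim (fun s => g (t + s)) 0 l -> derivable_pt_lim g t l.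
Proof.
move=> H eps He; have [d Hd] := H eps He; exists d => h Hh Hhd.
by have := Hd h Hh Hhd; rewrite Rplus_0_l Rplus_0_r.
Qed.

Lemma smooth_coord N (c : 'I_N) k : forall f, smooth_curve f -> Ck k (fun z : vec N => f (z c)).
Proof.
have Hc : forall f, smooth_curve f -> contn (fun z : vec N => f (z c)).
  move=> f Hf x eps He; have [d [Hd Hy]] := cont_eps (smooth_cont Hf (x c)) He.
  exists d; split => // y Hyx; exact: Hy.
elim: k => [|k IH] f Hf; first exact: Hc.
split; first exact: Hc.
move=> i.
have D : forall x, derivable_pt_lim (fun s => f (upd x i s c)) 0 (if c == i then dt f (x c) else 0).
  move=> x; rewrite /upd; case: (c == i).
    apply: (shift0 (g := f)); exact: smooth_der.
  exact: derivable_pt_lim_const.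
split; first by move=> x; rewrite (pd_eq (D x)).
have ->: (fun x => pd (fun z : vec N => f (z c)) x i) =
         (fun z : vec N => (if c == i then dt f else fun _ => 0) (z c)).
  apply: functional_extensionality => x; rewrite (pd_eq (D x)); by case: (c == i).
apply: IH; case: (c == i); [exact: smooth_dt | exact: smooth_const].
Qed.

Lemma ex_cont f a b : continuity f -> ex_RInt f a b.
Proof. move=> H; apply: ex_RInt_continuous => z _; exact: cont_co. Qed.

Lemma int_zero_pos f a b c : a < b -> continuity f -> (forall x, a < x < b -> 0 <= f x) ->
  is_RInt f a b 0 -> a < c < b -> f c <= 0.
Proof.
move=> Hab Hf Hp HI Hc; apply: Rnot_lt_le => Hfc.
have Hh : 0 < f c / 2 by lra.
have [d [Hd Hy]] := cont_eps (Hf c) Hh.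
set a' := Rmax a (c - d/2); set b' := Rmin b (c + d/2).
have Ha' : a <= a' /\ a' < c.
  split; first exact: Rmax_l. rewrite /a'; apply: Rmax_lub_lt; lra.
have Hb' : b' <= b /\ c < b'.
  split; first exact: Rmin_l. rewrite /b'; apply: Rmin_glb_lt; lra.
have E0 := is_RInt_unique _ _ _ _ HI.
have C1 := RInt_Chasles f a a' b (ex_cont _ _ Hf) (ex_cont _ _ Hf).
have C2 := RInt_Chasles f a' b' b (ex_cont _ _ Hf) (ex_cont _ _ Hf).
have P1 : 0 <= RInt f a a'.
  apply: RInt_ge_0; [lra | exact: ex_cont | move=> x Hx; apply: Hp; lra].
have P3 : 0 <= RInt f b' b.
  apply: RInt_ge_0; [lra | exact: ex_cont | move=> x Hx; apply: Hp; lra].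
have P2 : 0 < RInt f a' b'.
  apply: RInt_gt_0; [lra | | move=> x _; exact: cont_co].
  move=> x Hx.
  have Hxa : c - d/2 <= a' by apply: Rmax_r.
  have Hxb : b' <= c + d/2 by apply: Rmin_r.
  have : Rabs (f x - f c) < f c / 2 by apply: Hy; apply: Rabs_def1; lra.
  move/Rabs_def2; lra.
rewrite /plus /= in C1 C2. lra.
Qed.

Lemma endpoints g a b : a < b -> continuity g -> (forall x, a < x < b -> g x = 0) ->
  g a = 0 /\ g b = 0.
Proof.
move=> Hab Hg H; split.
  apply: NNPP => Hne.
  have Hpos : 0 < Rabs (g a) by apply: Rabs_pos_lt.
  have [d [Hd Hy]] := cont_eps (Hg a) Hpos.
  set x := a + Rmin d (b - a) / 2.
  have Hm1 : Rmin d (b - a) <= d by apply: Rmin_l.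
  have Hm2 : Rmin d (b - a) <= b - a by apply: Rmin_r.
  have Hm3 : 0 < Rmin d (b - a) by apply: Rmin_glb_lt; lra.
  have := Hy x; rewrite H; last by rewrite /x; lra.
  rewrite Rminus_0_l Rabs_Ropp => Hc; apply: (Rlt_irrefl (Rabs (g a))); apply: Hc.
  rewrite /x Rabs_right; lra.
apply: NNPP => Hne.
have Hpos : 0 < Rabs (g b) by apply: Rabs_pos_lt.
have [d [Hd Hy]] := cont_eps (Hg b) Hpos.
set x := b - Rmin d (b - a) / 2.
have Hm1 : Rmin d (b - a) <= d by apply: Rmin_l.
have Hm2 : Rmin d (b - a) <= b - a by apply: Rmin_r.
have Hm3 : 0 < Rmin d (b - a) by apply: Rmin_glb_lt; lra.
have := Hy x; rewrite H; last by rewrite /x; lra.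
rewrite Rminus_0_l Rabs_Ropp => Hc; apply: (Rlt_irrefl (Rabs (g b))); apply: Hc.
rewrite /x Rabs_left; lra.
Qed.

Lemma smooth_minus f g : smooth_curve f -> smooth_curve g -> smooth_curve (fun t => f t - g t).
Proof.
move=> Hf Hg k; apply: (Ckc_ext (f := fun t => f t + (fun _ => -1) t * g t)).
  move=> t /=; ring.
apply: Ckc_plus; [exact: Hf | exact: smooth_mult_k (smooth_const _) Hg].
Qed.

Lemma key_fwd (mq mv : R -> R) t0 t1 : t0 < t1 -> smooth_curve mq -> smooth_curve mv ->
 (forall phi, smooth_curve phi -> phi t0 = 0 -> phi t1 = 0 ->
     is_RInt (fun t => mq t * phi t + mv t * dt phi t) t0 t1 0) ->
 forall t, t0 <= t <= t1 -> dt mv t = mq t.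
Proof.
move=> Ht Smq Smv H.
set g := fun t => mq t - dt mv t.
have Sg : smooth_curve g by apply: smooth_minus => //; exact: smooth_dt.
set w := fun t => (t - t0) * (t1 - t).
have Sw : smooth_curve w.
  apply: smooth_mult; apply: smooth_minus; (exact: smooth_id || exact: smooth_const).
set phi := fun t => w t * g t.
have Sphi : smooth_curve phi by exact: smooth_mult.
have I := H phi Sphi ltac:(rewrite /phi /w; ring) ltac:(rewrite /phi /w; ring).
have ID : is_RInt (fun t => dt mv t * phi t + mv t * dt phi t) t0 t1 0.
  have := is_RInt_derive (fun t => mv t * phi t) (fun t => dt mv t * phi t + mv t * dt phi t) t0 t1.
  have -> : minus (mv t1 * phi t1) (mv t0 * phi t0) = 0.
    rewrite /phi /w /minus /plus /opp /=; ring.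
  apply.
    move=> x _; apply/is_derive_Reals.
    exact: (derivable_pt_lim_mult mv phi _ _ _ (smooth_der x Smv) (smooth_der x Sphi)).
  move=> x _; apply: cont_co; apply: smooth_cont.
  apply: smooth_plus; apply: smooth_mult => //; exact: smooth_dt.
have IG := is_RInt_minus _ _ _ _ _ _ I ID.
have IG' : is_RInt (fun t => w t * g t * g t) t0 t1 0.
  have -> : (0 = minus 0 0) by rewrite /minus /plus /opp /=; ring.
  apply: is_RInt_ext IG => x _; rewrite /minus /plus /opp /= /phi /g; ring.
have Cf : continuity (fun t => w t * g t * g t).
  apply: smooth_cont; apply: smooth_mult => //; exact: smooth_mult.
have Hpos : forall x, t0 < x < t1 -> 0 <= w x * g x * g x.
  move=> x Hx; rewrite Rmult_assoc; apply: Rmult_le_pos; last exact: Rle_0_sqr.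
  rewrite /w; apply: Rmult_le_pos; lra.
have Hin : forall c, t0 < c < t1 -> g c = 0.
  move=> c Hc; have Hle := int_zero_pos Ht Cf Hpos IG' Hc.
  have Hw : 0 < w c by rewrite /w; apply: Rmult_lt_0_compat; lra.
  have Hz : w c * (g c * g c) = 0.
    apply: Rle_antisym; first by rewrite -Rmult_assoc.
    exact: Rmult_le_pos (Rlt_le _ _ Hw) (Rle_0_sqr _).
  case: (Rmult_integral _ _ Hz) => [Hw0|Hgg]; first lra.
  by case: (Rmult_integral _ _ Hgg).
have [E0 E1] := endpoints Ht (smooth_cont Sg) Hin.
move=> t Hti.
have : g t = 0.
  case: (Req_dec t t0) => [->//|Hn0]; case: (Req_dec t t1) => [->//|Hn1].
  apply: Hin; lra.
rewrite /g; lra.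
Qed.

Lemma upd0 N (x : vec N) a : upd x a 0 = x.
Proof. apply: functional_extensionality => j; rewrite /upd; case: (j == a) => //; ring. Qed.

Lemma mvt_dir N (f : vec N -> R)
  (Hd : forall x i, derivable_pt_lim (fun s => f (upd x i s)) 0 (pd f x i)) x a d :
  exists th, Rabs th <= Rabs d /\ f (upd x a d) - f x = pd f (upd x a th) a * d.
Proof.
have U : forall th, derivable_pt_lim (fun s => f (upd x a s)) th (pd f (upd x a th) a).
  move=> th; apply: unshift0; apply: (dpl_ext _ (Hd (upd x a th) a)) => s.
  congr f; apply: functional_extensionality => j; rewrite /upd; case: (j == a) => //; ring.
have E0 : f (upd x a 0) = f x by rewrite upd0.
case: (Rtotal_order 0 d) => [Hlt|[Heq|Hgt]].
- have [th [E Hth]] := MVT_cor2 (fun s => f (upd x a s)) (fun th => pd f (upd x a th) a) 0 d Hlt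
     (fun th _ => U th).
  exists th; split; first by rewrite !Rabs_right; lra.
  rewrite -E0 E; ring.
- exists 0; split; first by rewrite -Heq; lra.
  by rewrite -Heq E0; ring.
- have [th [E Hth]] := MVT_cor2 (fun s => f (upd x a s)) (fun th => pd f (upd x a th) a) d 0 Hgt
     (fun th _ => U th).
  exists th; split; first by rewrite !Rabs_left; lra.
  rewrite -E0; rewrite /= in E; lra.
Qed.

Lemma unif_fin N (P : 'I_N -> R -> Prop) :
  (forall j, exists d, 0 < d /\ forall h, Rabs h < d -> P j h) ->
  exists d, 0 < d /\ forall h, Rabs h < d -> forall j, P j h.
Proof.
move=> H.
suff: forall r : seq 'I_N, exists d, 0 < d /\ forall h, Rabs h < d -> forall j, j \in r -> P j h.
  move=> /(_ (index_enum 'I_N)) [d [Hd Hh]]; exists d; split => // h Hlt j.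
  apply: Hh => //; exact: mem_index_enum.
elim=> [|a r [dr [Hdr Hr]]]; first by exists 1; split => //; lra.
have [da [Hda Ha]] := H a.
exists (Rmin da dr); split; first by apply: Rmin_glb_lt.
move=> h Hh j; rewrite inE => /orP [/eqP ->|Hj].
  apply: Ha; apply: Rlt_le_trans Hh _; exact: Rmin_l.
apply: Hr => //; apply: Rlt_le_trans Hh _; exact: Rmin_r.
Qed.

Lemma dcont g t l : derivable_pt_lim g t l -> continuity_pt g t.
Proof. move=> H; apply: derivable_continuous_pt; exists l; exact: H. Qed.

Lemma chain_step N (f : vec N -> R)
  (Hd : forall x i, derivable_pt_lim (fun s => f (upd x i s)) 0 (pd f x i))
  (Hc : forall i, contn (fun x => pd f x i)) (Q : R -> vec N) a d d' t :
  (forall j, continuity_pt (fun s => Q s j) t) -> derivable_pt_lim d t d' -> d t = 0 ->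
  derivable_pt_lim (fun s => f (upd (Q s) a (d s)) - f (Q s)) t (pd f (Q t) a * d').
Proof.
move=> HQ Hd' Hd0 eps He.
set A := pd f (Q t) a.
have [th Hth] : exists th : R -> R, forall s, Rabs (th s) <= Rabs (d s) /\
    f (upd (Q s) a (d s)) - f (Q s) = pd f (upd (Q s) a (th s)) a * d s.
  exists (fun s => epsilon (inhabits 0) (fun th => Rabs th <= Rabs (d s) /\
    f (upd (Q s) a (d s)) - f (Q s) = pd f (upd (Q s) a th) a * d s)) => s.
  exact: (epsilon_spec (inhabits 0) _ (mvt_dir Hd (Q s) a (d s))).
have HA : 0 <= Rabs A by apply: Rabs_pos.
have Hd'0 : 0 <= Rabs d' by apply: Rabs_pos.
set e1 := eps / (2 * (Rabs d' + 1)).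
set e3 := eps / (2 * (Rabs A + 1)).
have He1 : 0 < e1 by rewrite /e1; apply: Rdiv_lt_0_compat; lra.
have He3 : 0 < e3 by rewrite /e3; apply: Rdiv_lt_0_compat; lra.
have He2 : 0 < Rmin 1 e3 by apply: Rmin_glb_lt; lra.
have [d1 Hd1] := Hd' _ He2.
have [eta [Heta Hy]] := Hc a (Q t) e1 He1.
have Heta2 : 0 < eta / 2 by lra.
have [d2 [Hd2 HQ2]] : exists d2, 0 < d2 /\ forall h, Rabs h < d2 -> forall j,
    Rabs (Q (t + h) j - Q t j) < eta / 2.
  apply: unif_fin => j; have [dd [Hdd Hyy]] := cont_eps (HQ j) Heta2.
  exists dd; split => // h Hh; apply: Hyy; by rewrite /Rminus Rplus_comm -Rplus_assoc Rplus_opp_l Rplus_0_l.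
have [d3 [Hd3 HD3]] := cont_eps (dcont Hd') Heta2.
have Hpos : 0 < Rmin d1 (Rmin d2 d3).
  apply: Rmin_glb_lt; first exact: cond_pos. by apply: Rmin_glb_lt.
exists (mkposreal _ Hpos) => h Hh0 /= Hh.
have Hh1 : Rabs h < d1 by apply: Rlt_le_trans Hh _; apply: Rmin_l.
have Hh2 : Rabs h < d2.
  apply: Rlt_le_trans Hh _; apply: Rle_trans (Rmin_r _ _) _; apply: Rmin_l.
have Hh3 : Rabs h < d3.
  apply: Rlt_le_trans Hh _; apply: Rle_trans (Rmin_r _ _) _; apply: Rmin_r.
have [Hthb Heq] := Hth (t + h).
rewrite Hd0 upd0 Rminus_eq_0 Rminus_0_r Heq.
set p := pd f (upd (Q (t + h)) a (th (t + h))) a.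
set q := (d (t + h) - d t) / h.
have Hq : Rabs (q - d') < Rmin 1 e3 by apply: Hd1.
have Hq1 : Rabs (q - d') < 1 by apply: Rlt_le_trans Hq _; apply: Rmin_l.
have Hq3 : Rabs (q - d') < e3 by apply: Rlt_le_trans Hq _; apply: Rmin_r.
have Hdh : Rabs (d (t + h)) < eta / 2.
  have := HD3 (t + h); rewrite Hd0 Rminus_0_r; apply.
  by rewrite /Rminus Rplus_comm -Rplus_assoc Rplus_opp_l Rplus_0_l.
have Hp : Rabs (p - A) < e1.
  apply: Hy => j; rewrite /upd; case: (j == a).
    have := HQ2 h Hh2 j.
    have := Rabs_triang (Q (t + h) j - Q t j) (th (t + h)).
    have -> : Q (t + h) j - Q t j + th (t + h) = Q (t + h) j + th (t + h) - Q t j by ring.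
    lra.
  have := HQ2 h Hh2 j; lra.
have -> : p * d (t + h) / h - A * d' = (p - A) * q + A * (q - d').
  rewrite /q Hd0; field; exact: Hh0.
have Hqb : Rabs q <= Rabs d' + 1.
  have := Rabs_triang (q - d') d'; rewrite (_ : q - d' + d' = q); last ring. lra.
have B1 : Rabs ((p - A) * q) <= eps / 2.
  rewrite Rabs_mult.
  apply: Rle_trans (Rmult_le_compat _ _ _ _ (Rabs_pos _) (Rabs_pos _) (Rlt_le _ _ Hp) Hqb) _.
  rewrite /e1; apply: Req_le; field; lra.
have B2 : Rabs (A * (q - d')) < eps / 2.
  rewrite Rabs_mult.
  apply: Rle_lt_trans (Rmult_le_compat_l _ _ _ HA (Rlt_le _ _ Hq3)) _.
  have -> : eps / 2 = (Rabs A + 1) * e3 by rewrite /e3; field; lra.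
  apply: Rmult_lt_compat_r => //; lra.
apply: Rle_lt_trans (Rabs_triang _ _) _; lra.
Qed.

Lemma chain N (f : vec N -> R) (c : R -> vec N) (c' : vec N) t : Ck 1 f ->
  (forall j, derivable_pt_lim (fun s => c s j) t (c' j)) ->
  derivable_pt_lim (fun s => f (c s)) t (rsum (fun j => pd f (c t) j * c' j)).
Proof.
move=> [_ H1] Hc'.
have Hd : forall x i, derivable_pt_lim (fun s => f (upd x i s)) 0 (pd f x i).
  by move=> x i; exact: (H1 i).1.
have Hc : forall i, contn (fun x => pd f x i) by move=> i; exact: (H1 i).2.
suff: forall r : seq 'I_N, uniq r -> derivable_pt_lim
    (fun s => f (fun j => if j \in r then c s j else c t j)) t
    (\big[Rplus/0]_(j <- r) (pd f (c t) j * c' j)).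
  move=> /(_ (index_enum 'I_N) (index_enum_uniq _)) H.
  apply: (dpl_ext _ H) => s; congr f; apply: functional_extensionality => j.
  by rewrite mem_index_enum.
elim=> [|a r IH] /=.
  move=> _; rewrite big_nil.
  apply: (dpl_ext (f := fun _ => f (c t))); last exact: derivable_pt_lim_const.
  move=> s; congr f; apply: functional_extensionality => j; by rewrite in_nil.
move=> /andP [Ha Hr]; rewrite big_cons.
set P := fun s j => if j \in r then c s j else c t j.
have EP : forall s, (fun j => if j \in a :: r then c s j else c t j) = upd (P s) a (c s a - c t a).
  move=> s; apply: functional_extensionality => j; rewrite /upd /P in_cons.
  case: eqP => [->|_] /=; last done.
  by rewrite (negbTE Ha); ring.
have EPt : P t = c t.
  by apply: functional_extensionality => j; rewrite /P; case: (j \in r).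
apply: (dpl_ext (f := fun s => f (P s) + (f (upd (P s) a (c s a - c t a)) - f (P s)))).
  by move=> s; rewrite EP; ring.
rewrite Rplus_comm.
apply: (derivable_pt_lim_plus (fun s => f (P s))); first exact: IH.
have CS := @chain_step N f Hd Hc P a (fun s => c s a - c t a) (c' a) t.
rewrite EPt in CS; apply: CS.
- move=> j; rewrite /P; case: (j \in r); first exact: (dcont (Hc' j)).
  by apply: continuity_pt_const.
- rewrite (_ : c' a = c' a - 0); last ring.
  apply: (derivable_pt_lim_minus (fun s => c s a) (fun _ => c t a)) => //.
  exact: derivable_pt_lim_const.
- by rewrite Rminus_eq_0.
Qed.

Lemma cont_rsum n (f : 'I_n -> R -> R) x :
  (forall i, continuity_pt (f i) x) -> continuity_pt (fun s => rsum (fun i => f i s)) x.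
Proof.
move=> H; rewrite /rsum; elim: (index_enum 'I_n) => [|a r IH].
  apply: continuity_pt_const => y z; by rewrite !big_nil.
have ->: (fun s => \big[Rplus/0]_(i <- a :: r) f i s) =
   (f a + (fun s => \big[Rplus/0]_(i <- r) f i s))%F.
  by apply: functional_extensionality => s; rewrite big_cons.
exact: continuity_pt_plus.
Qed.

Lemma cont_comp N (g : vec N -> R) (c : R -> vec N) t :
  contn g -> (forall k, continuity_pt (fun s => c s k) t) -> continuity_pt (fun s => g (c s)) t.
Proof.
move=> Hg Hc eps He.
have [d [Hd Hy]] := Hg (c t) eps He.
have [d2 [Hd2 H2]] : exists d2, 0 < d2 /\ forall h, Rabs h < d2 -> forall k,
    Rabs (c (t + h) k - c t k) < d.
  apply: unif_fin => k; have [dd [Hdd Hyy]] := cont_eps (Hc k) Hd.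
  exists dd; split => // h Hh; apply: Hyy; by rewrite /Rminus Rplus_comm -Rplus_assoc Rplus_opp_l Rplus_0_l.
exists d2; split => // y [_ Hyt].
change (Rabs (y - t) < d2) in Hyt; change (Rabs (g (c y) - g (c t)) < eps).
rewrite -{1}(Rplus_minus t y).
apply: Hy => k; apply: H2; exact: Hyt.
Qed.

Section Bwd.
Variables (n : nat) (X : R -> vec n -> vec n) (sigma mt : R -> vec n).
Hypothesis HX : smoothTD X.
Hypothesis Hs : smooth_vcurve sigma.
Hypothesis Hm : smooth_vcurve mt.

Definition Xz (i : 'I_n) (z : vec (1 + n)) : R :=
  X (z (lshift n ord0)) (fun j => z (rshift 1 j)) i.
Definition zc (s : R) : vec (1 + n) := cat2 (fun _ : 'I_1 => s) (sigma s).

Lemma Xz_zc i s : Xz i (zc s) = X s (sigma s) i.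
Proof.
rewrite /Xz /zc cat2_l; congr X; apply: functional_extensionality => j; exact: cat2_r.
Qed.

Lemma X_time i t : dt (fun s => X s (sigma t) i) t = pd (Xz i) (zc t) (lshift n ord0).
Proof.
apply: dt_eq; apply: unshift0.
have [_ H1] := HX i 1%nat; have [D _] := H1 (lshift n ord0).
apply: (dpl_ext _ (D (zc t))) => s.
rewrite /Xz /zc /upd eq_lshift eqxx cat2_l; congr X.
apply: functional_extensionality => j; by rewrite eq_rlshift cat2_r.
Qed.

Lemma X_space i t j : pd (fun q => X t q i) (sigma t) j = pd (Xz i) (zc t) (rshift 1 j).
Proof.
apply: pd_eq.
have [_ H1] := HX i 1%nat; have [D _] := H1 (rshift 1 j).
apply: (dpl_ext _ (D (zc t))) => s.
rewrite /Xz /zc /upd eq_lrshift cat2_l; congr X.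
apply: functional_extensionality => k; by rewrite eq_rshift !cat2_r.
Qed.

Definition zc' t : vec (1 + n) := cat2 (fun _ : 'I_1 => 1) (fun j => dt (fun s => sigma s j) t).

Lemma DX i t : derivable_pt_lim (fun s => X s (sigma s) i) t
  (dt (fun s => X s (sigma t) i) t +
   rsum (fun j => dt (fun s => sigma s j) t * pd (fun q => X t q i) (sigma t) j)).
Proof.
have C := @chain (1 + n) (Xz i) zc (zc' t) t (HX i 1%nat).
apply: (dpl_ext (f := fun s => Xz i (zc s))); first by move=> s; rewrite Xz_zc.
have -> : dt (fun s => X s (sigma t) i) t +
   rsum (fun j => dt (fun s => sigma s j) t * pd (fun q => X t q i) (sigma t) j) =
   rsum (fun k => pd (Xz i) (zc t) k * zc' t k).
  rewrite /rsum big_split_ord /= big_ord1 X_time /zc' cat2_l Rmult_1_r.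
  congr Rplus; apply: eq_bigr => j _; rewrite X_space cat2_r; ring.
apply: C => k; rewrite /zc /zc' /cat2; case: (split k) => [_|j].
  exact: derivable_pt_lim_id.
exact: smooth_der.
Qed.

Lemma smoothTD_C1 i : Ck 1 (Xz i).
Proof. exact: HX i 1%nat. Qed.

Lemma cont_pdXz i k t : continuity_pt (fun s => pd (Xz i) (zc s) k) t.
Proof.
have [_ H1] := HX i 1%nat; have [_ C] := H1 k.
apply: (cont_comp (g := fun z => pd (Xz i) z k)) => // l.
rewrite /zc /cat2; case: (split l) => [_|j].
  exact: continuity_pt_id.
exact: smooth_cont.
Qed.

Definition Fm t := rsum (fun i => mt t i * X t (sigma t) i).

Lemma key_bwd t0 t1 : t0 <= t1 ->
  (forall i, X t0 (sigma t0) i = 0) -> (forall i, X t1 (sigma t1) i = 0) ->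
  exists pr : Riemann_integrable (pairing X sigma (fun t i => dt (fun s => mt s i) t) mt) t0 t1,
    RiemannInt pr = 0.
Proof.
move=> Ht H0 H1.
set pa := pairing X sigma (fun t i => dt (fun s => mt s i) t) mt.
have DF : forall t, derivable_pt_lim Fm t (pa t).
  move=> t; apply: deriv_rsum => i.
  apply: (derivable_pt_lim_mult (fun s => mt s i) (fun s => X s (sigma s) i)).
    exact: smooth_der.
  exact: DX.
have CP : forall t, continuity_pt pa t.
  move=> t; rewrite /pa /pairing; apply: cont_rsum => i.
  apply: continuity_pt_plus; apply: continuity_pt_mult.
  - apply: smooth_cont; apply: smooth_dt; exact: Hm.
  - exact: (dcont (DX i t)).
  - exact: smooth_cont.
  - apply: continuity_pt_plus.
      rewrite (functional_extensionality (fun s => dt (fun s0 => X s0 (sigma s) i) s)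
         (fun s => pd (Xz i) (zc s) (lshift n ord0))); first exact: cont_pdXz.
      by move=> s; rewrite X_time.
    apply: cont_rsum => j; apply: continuity_pt_mult.
      apply: smooth_cont; apply: smooth_dt; exact: Hs.
    rewrite (functional_extensionality (fun s => pd (fun q => X s q i) (sigma s) j)
         (fun s => pd (Xz i) (zc s) (rshift 1 j))); first exact: cont_pdXz.
    by move=> s; rewrite X_space.
have IR : is_RInt pa t0 t1 (minus (Fm t1) (Fm t0)).
  apply: is_RInt_derive => x _; first by apply/is_derive_Reals.
  exact: cont_co.
have E : minus (Fm t1) (Fm t0) = 0.
  rewrite /minus /plus /opp /= /Fm.
  rewrite (rsum_ext (G := fun _ => 0)); last by move=> i; rewrite H1; ring.
  rewrite (rsum_ext (F := fun i => mt t0 i * X t0 (sigma t0) i) (G := fun _ => 0)); last by move=> i; rewrite H0; ring.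
  rewrite rsum0; ring.
rewrite E in IR.
exists (ex_RInt_Reals_0 _ _ _ (ex_intro _ _ IR)).
rewrite -RInt_Reals; exact: is_RInt_unique.
Qed.
End Bwd.

Lemma fwd_int n (sigma mq mv : R -> vec n) t0 t1 i (phi : R -> R) :
  smooth_curve phi -> phi t0 = 0 -> phi t1 = 0 ->
  (forall X : R -> vec n -> vec n, smoothTD X ->
       (forall i, X t0 (sigma t0) i = 0) -> (forall i, X t1 (sigma t1) i = 0) ->
       exists pr : Riemann_integrable (pairing X sigma mq mv) t0 t1,
         RiemannInt pr = 0) ->
  is_RInt (fun t => mq t i * phi t + mv t i * dt phi t) t0 t1 0.
Proof.
move=> Sp P0 P1 Int.
set X := fun (s : R) (q : vec n) (j : 'I_n) => if j == i then phi s else 0.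
have SX : smoothTD X.
  move=> j k; rewrite /X; case: (j == i).
    exact: (smooth_coord (lshift n ord0) k Sp).
  exact: (smooth_coord (lshift n ord0) k (smooth_const 0)).
have [pr Hpr] := Int X SX ltac:(by move=> j; rewrite /X P0; case: (j == i))
                            ltac:(by move=> j; rewrite /X P1; case: (j == i)).
have I := RInt_correct _ _ _ (ex_RInt_Reals_1 _ _ _ pr).
rewrite (RInt_Reals _ _ _ pr) Hpr in I.
apply: is_RInt_ext I => t _.
rewrite /pairing.
rewrite (rsum_ext (G := fun j => if j == i then mq t i * phi t + mv t i * dt phi t else 0)).
  by rewrite rsum_pred1.
move=> j.
have Z : forall k, pd (fun q => X t q j) (sigma t) k = 0.
  move=> k; apply: pd_eq; exact: derivable_pt_lim_const.
rewrite (rsum_ext (G := fun _ => 0)); last by move=> k; rewrite Z; ring.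
rewrite rsum0 /X; case: eqP => [->|_].
  by rewrite Rplus_0_r.
rewrite (dt_eq (derivable_pt_lim_const 0 t)); ring.
Qed.

Theorem mainTheorem7 (n m : nat) (Gam : vec n -> vec m -> vec n)
    (L : vec n -> vec m -> R)
    (HGam : forall i : 'I_n, smooth2 (fun q u => Gam q u i))
    (HL : smooth2 L)
    (t0 t1 : R) (Ht : t0 < t1)
    (sigma : R -> vec n) (Hsigma : smooth_vcurve sigma) :
  is_solution Gam L t0 t1 sigma <->
  exists (u : R -> vec m) (mt : R -> vec n),
    smooth_vcurve mt /\
    forall t, t0 <= t <= t1 ->
      (forall i : 'I_n, derivable_pt_lim (fun s => mt s i) t
          (- pd (fun q => Hfun Gam L q (mt t) (u t)) (sigma t) i)) /\
      (forall a : 'I_m, pd (fun u' => Hfun Gam L (sigma t) (mt t) u') (u t) a = 0) /\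
      (forall i : 'I_n,
          derivable_pt_lim (fun s => sigma s i) t
            (pd (fun p => Hfun Gam L (sigma t) p (u t)) (mt t) i) /\
          pd (fun p => Hfun Gam L (sigma t) p (u t)) (mt t) i = Gam (sigma t) (u t) i).
Proof.
split.
- move=> [mq [mv [Smq [Smv [Sig Int]]]]].
  set P := fun t (u : vec m) =>
    (forall i, Gam (sigma t) u i = (fun i => dt (fun s => sigma s i) t) i) /\
    (forall j, mq t j + rsum (fun i => mv t i * pd (fun q' => Gam q' u i) (sigma t) j)
               = pd (fun q' => L q' u) (sigma t) j) /\
    (forall a, rsum (fun i => mv t i * pd (fun u' => Gam (sigma t) u' i) u a)
               = pd (fun u' => L (sigma t) u') u a).
  exists (fun t => epsilon (inhabits (fun _ => 0)) (P t)), mv; split => // t Hti.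
  have [Eg [Eq Eu]] : P t (epsilon (inhabits (fun _ => 0)) (P t)).
    exact: (epsilon_spec (inhabits (fun _ => 0)) (P t) (Sig t Hti)).
  set u := epsilon (inhabits (fun _ => 0)) (P t) in Eg Eq Eu *.
  have KF : forall i, dt (fun s => mv s i) t = mq t i.
    move=> i; apply: (@key_fwd (fun t => mq t i) (fun t => mv t i) t0 t1 Ht (Smq i) (Smv i) _ t Hti).
    move=> phi Sp P0 P1; exact: (@fwd_int n sigma mq mv t0 t1 i phi Sp P0 P1 Int).
  split; [|split].
  + move=> i; rewrite (Hq HGam HL).
    have -> : - (rsum (fun k => mv t k * pd (fun q' => Gam q' u k) (sigma t) i) -
                 pd (fun q' => L q' u) (sigma t) i) = dt (fun s => mv s i) t.
      rewrite KF; have := Eq i; lra.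
    exact: smooth_der.
  + move=> a; rewrite (Hu HGam HL) Eu; ring.
  + move=> i; rewrite Hp Eg; split => //; exact: smooth_der.
- move=> [u [mt [Smt H]]].
  exists (fun t i => dt (fun s => mt s i) t), mt; split.
    move=> i; exact: smooth_dt.
  split => //; split.
    move=> t Hti; have [A [B C]] := H t Hti; exists (u t); split; [|split].
    + move=> i; have [C1 C2] := C i; rewrite (dt_eq C1) C2 //.
    + move=> j; rewrite (dt_eq (A j)) (Hq HGam HL); ring.
    + move=> a; have := B a; rewrite (Hu HGam HL); lra.
  move=> X HX H0 H1; exact: (key_bwd HX Hsigma Smt (Rlt_le _ _ Ht) H0 H1).
Qed.
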